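(* Let $\Lambda=[\lambda_{\min},\lambda_{\max}]\subset[0,\infty)$, $\beta\ge0$, let $\tilde\nu(\lambda,dx)$ be a probability kernel on $(0,\infty)$ with $s_0>0$ such that $\sup_{\lambda\in\Lambda}\int_0^\infty e^{sx}\tilde\nu(\lambda,dx)<\infty$ for $s\in[0,s_0)$, and let $\eta\in\mathbb C$ with $\Re(\eta)=\delta<s_0$. Let $F\in C^2(\Lambda)$ and let $\Pi_{\Delta\lambda}F$ be its PCHIP interpolant (interpolation order $p=2$) or piecewise-linear interpolant ($p=1$) on a grid of maximal step $h$. With $N_{\exp}[F](\lambda)=\lambda\int_0^\infty(e^{\eta x}F(\lambda+\beta x)-F(\lambda))\tilde\nu(\lambda,dx)$ (clamped extension outside $\Lambda$), $$\|N_{\exp}[\Pi_{\Delta\lambda}F]-N_{\exp}[F]\|_{\infty,\Lambda}\le\lambda_{\max}\big(C^*_\delta(\Lambda)+1\big)\|\Pi_{\Delta\lambda}F-F\|_{\infty,\Lambda}=\mathcal O(h^p),$$ uniformly on $\Lambda$, where $C^*_\delta(\Lambda)=\sup_{\lambda\in\Lambda}\int_0^\infty e^{\delta x}\tilde\nu(\lambda,dx)<\infty$.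
   Context: Clamped extension: a function on $\Lambda$ is extended to $[0,\infty)$ by the value at the nearest endpoint of $\Lambda$. PCHIP is the piecewise cubic Hermite interpolant with Fritsch–Carlson slopes (interior slope $m_j=\frac{w_1+w_2}{w_1/d_{j-1}+w_2/d_j}$, $w_1=2h_j+h_{j-1}$, $w_2=h_j+2h_{j-1}$, when consecutive secant slopes $d_{j-1},d_j$ satisfy $d_{j-1}d_j>0$, and $m_j=0$ otherwise). *)

(* Defs.v *)
From HB Require Import structures.
From mathcomp Require Import all_boot all_order all_algebra.
From mathcomp Require Import all_classical all_reals all_analysis.
From mathcomp Require Import complex.
Set Implicit Arguments.
Unset Strict Implicit.
Unset Printing Implicit Defensive.
Import Order.TTheory GRing.Theory Num.Theory.
Import numFieldNormedType.Exports.
Local Open Scope ring_scope.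
Local Open Scope classical_set_scope.
Local Open Scope complex_scope.

Section Defs.
Context {R : realType}.

Definition clamp (a b x : R) : R := Num.min (Num.max x a) b.
Definition clampext (a b : R) (G : R -> R) (x : R) : R := G (clamp a b x).

Definition cmod (z : R[i]) : R :=
  Num.sqrt (complex.Re z ^+ 2 + complex.Im z ^+ 2).

(** Complex exponential e^{eta x} = e^{Re(eta) x} (cos(Im(eta) x) + i sin(Im(eta) x)). *)
Definition cexp_lin (eta : R[i]) (x : R) : R[i] :=
  (expR (complex.Re eta * x) * cos (complex.Im eta * x))
    +i* (expR (complex.Re eta * x) * sin (complex.Im eta * x)).

Definition cintegral (mu : measure R R) (D : set R) (f : R -> R[i]) : R[i] :=
  (Rintegral mu D (fun x => complex.Re (f x)))
    +i* (Rintegral mu D (fun x => complex.Im (f x))).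

Definition supnorm (a b : R) (G : R -> R) : \bar R :=
  ereal_sup [set (`|G x|)%:E | x in `[a, b]].
Definition csupnorm (a b : R) (G : R -> R[i]) : \bar R :=
  ereal_sup [set (cmod (G x))%:E | x in `[a, b]].

Definition Nexp (a b beta : R) (eta : R[i]) (nu : R -> measure R R)
    (G : R -> R) (lam : R) : R[i] :=
  lam%:C * cintegral (nu lam) `]0%R, +oo[
    (fun x => cexp_lin eta x * (clampext a b G (lam + beta * x))%:C
              - (clampext a b G lam)%:C).

Definition is_grid (a b : R) (n : nat) (t : nat -> R) : Prop :=
  (0 < n)%N /\ t 0%N = a /\ t n = b /\ (forall j, (j < n)%N -> t j < t j.+1).

Definition hstep (t : nat -> R) (j : nat) : R := t j.+1 - t j.

Definition maxstep (n : nat) (t : nat -> R) : R := \big[Num.max/0]_(j < n) hstep t j.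

(** index j of the cell [t j, t (j+1)] containing x (for x in [a,b]):
    the number of interior nodes t 1, ..., t (n-1) that are <= x. *)
Definition cell (n : nat) (t : nat -> R) (x : R) : nat :=
  (\sum_(1 <= k < n) nat_of_bool (t k <= x)%R)%N.

Definition secant (t : nat -> R) (F : R -> R) (j : nat) : R :=
  (F (t j.+1) - F (t j)) / hstep t j.

(** Fritsch--Carlson interior slope at node j (0 < j < n). *)
Definition fc_interior_slope (t : nat -> R) (F : R -> R) (j : nat) : R :=
  let d0 := secant t F j.-1 in
  let d1 := secant t F j in
  let h0 := hstep t j.-1 in
  let h1 := hstep t j in
  let w1 := 2 * h1 + h0 in
  let w2 := h1 + 2 * h0 in
  if 0 < d0 * d1 then (w1 + w2) / (w1 / d0 + w2 / d1) else 0.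

(** End-point slope (the standard one-sided three-point rule with the
    shape-preserving corrections used by PCHIP implementations, e.g. SciPy):
    h0, d0 belong to the end interval, h1, d1 to its neighbour. *)
Definition fc_end_slope (h0 h1 d0 d1 : R) : R :=
  let m := ((2 * h0 + h1) * d0 - h0 * d1) / (h0 + h1) in
  if Num.sg m != Num.sg d0 then 0
  else if (Num.sg d0 != Num.sg d1) && (3 * `|d0| < `|m|) then 3 * d0
  else m.

Definition pchip_slope (n : nat) (t : nat -> R) (F : R -> R) (j : nat) : R :=
  if n == 1%N then secant t F 0
  else if j == 0%N then
    fc_end_slope (hstep t 0) (hstep t 1) (secant t F 0) (secant t F 1)
  else if j == n then
    fc_end_slope (hstep t n.-1) (hstep t n.-2) (secant t F n.-1) (secant t F n.-2)
  else fc_interior_slope t F j.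

Definition pchip (n : nat) (t : nat -> R) (F : R -> R) (x : R) : R :=
  let j := cell n t x in
  let hj := hstep t j in
  let u := (x - t j) / hj in
  (2 * u ^+ 3 - 3 * u ^+ 2 + 1) * F (t j)
  + (u ^+ 3 - 2 * u ^+ 2 + u) * hj * pchip_slope n t F j
  + (- 2 * u ^+ 3 + 3 * u ^+ 2) * F (t j.+1)
  + (u ^+ 3 - u ^+ 2) * hj * pchip_slope n t F j.+1.

Definition pwlinear (n : nat) (t : nat -> R) (F : R -> R) (x : R) : R :=
  let j := cell n t x in
  F (t j) + (x - t j) / hstep t j * (F (t j.+1) - F (t j)).

End Defs.

Inductive scheme := PiecewiseLinear | PCHIP.

Definition scheme_order (s : scheme) : nat :=
  match s with PiecewiseLinear => 1%N | PCHIP => 2%N end.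

Definition interp {R : realType} (s : scheme) (n : nat) (t : nat -> R) (F : R -> R) : R -> R :=
  match s with PiecewiseLinear => pwlinear n t F | PCHIP => pchip n t F end.

Definition C2_on {R : realType} (a b : R) (F : R -> R) : Prop :=
  exists F1 F2 : R -> R,
    [/\ {within `[a, b], continuous F},
        {within `[a, b], continuous F1},
        {within `[a, b], continuous F2},
        (forall x, x \in `]a, b[ -> is_derive x (1:R) F (F1 x)) &
        (forall x, x \in `]a, b[ -> is_derive x (1:R) F1 (F2 x))].

(* Main.v *)
Require Import Defs.
From HB Require Import structures.
From mathcomp Require Import all_boot all_order all_algebra.
From mathcomp Require Import all_classical all_reals all_analysis.
From mathcomp Require Import complex measurable_realfun.
From mathcomp Require Import ring lra zify.
Import Order.TTheory GRing.Theory Num.Theory.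
Import numFieldNormedType.Exports.
Local Open Scope ring_scope.
Local Open Scope classical_set_scope.

Section Alg.
Variable R : realType.
Implicit Types a b c d e g : R.

Lemma absP (x y : R) : `|x| <= y -> -y <= x <= y.
Proof. by rewrite ler_norml. Qed.

Lemma absI (x y : R) : -y <= x -> x <= y -> `|x| <= y.
Proof. by move=> h1 h2; rewrite ler_norml h1 h2. Qed.

Lemma sg_diff a b : Num.sg a != Num.sg b -> `|a| <= `|a - b|.
Proof.
have [a0|a0|->] := ltrgtP a 0; last by rewrite normr0.
- rewrite ltr0_sg // => hb; rewrite ltr0_norm //.
  have b0 : 0 <= b.
    rewrite leNgt; apply/negP => b0; by move: hb; rewrite (ltr0_sg b0) eqxx.
  rewrite -normrN opprB; apply: (le_trans _ (ler_norm _)); lra.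
- rewrite gtr0_sg // => hb; rewrite gtr0_norm //.
  have b0 : b <= 0.
    rewrite leNgt; apply/negP => b0; by move: hb; rewrite (gtr0_sg b0) eqxx.
  apply: (le_trans _ (ler_norm _)); lra.
Qed.

Lemma end_slope_err (h0 h1 d0 d1 g e : R) : 0 < h0 -> 0 < h1 ->
  `|d0 - g| <= e -> `|d1 - g| <= 3 * e ->
  `|fc_end_slope h0 h1 d0 d1 - g| <= 20 * e.
Proof.
move=> p0 p1 /absP/andP[e1 e2] /absP/andP[e3 e4].
have e0 : 0 <= e by lra.
rewrite /fc_end_slope.
set m := (_ / _).
have hm : m - d0 = h0 / (h0 + h1) * (d0 - d1).
  rewrite /m; field; lra.
have l0 : 0 <= h0 / (h0 + h1) by apply: divr_ge0; lra.
have l1 : h0 / (h0 + h1) <= 1 by rewrite ler_pdivrMr; lra.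
have md : -(4 * e) <= m - d0 <= 4 * e by rewrite hm; apply/andP; split; nra.
case/andP: md => md1 md2.
case: ifP => [hs|_].
  have hh : `|d0| <= `|d0 - m| by apply: sg_diff; rewrite eq_sym.
  have : `|d0| <= 4 * e by apply: (le_trans hh); apply: absI; lra.
  move/absP/andP => [q1 q2]; apply: absI; lra.
case: ifP => [/andP[hs _]|_]; last by apply: absI; lra.
have hh : `|d0| <= `|d0 - d1| by apply: sg_diff.
have : `|d0| <= 4 * e by apply: (le_trans hh); apply: absI; lra.
move/absP/andP => [q1 q2]; apply: absI; lra.
Qed.

Lemma hm_between {w1 w2 d0 d1 : R} : 0 < w1 -> 0 < w2 -> 0 < d0 * d1 ->
  ((w1 + w2) / (w1 / d0 + w2 / d1) - d0) * ((w1 + w2) / (w1 / d0 + w2 / d1) - d1) <= 0.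
Proof.
move=> p1 p2 pd; set v := (w1 + w2) / _.
have d00 : d0 != 0 by apply/eqP => h; move: pd; rewrite h mul0r ltxx.
have d10 : d1 != 0 by apply/eqP => h; move: pd; rewrite h mulr0 ltxx.
set D := w1 * d1 + w2 * d0.
have Dd : 0 < D * d0 by rewrite /D; nra.
have D0 : D != 0 by apply/eqP => h; move: Dd; rewrite h mul0r ltxx.
have hv : v = (w1 + w2) * d0 * d1 / D.
  by rewrite /v /D; field; rewrite -/D D0 d00 d10.
rewrite hv.
have -> : ((w1 + w2) * d0 * d1 / D - d0) * ((w1 + w2) * d0 * d1 / D - d1)
   = - (w1 * w2 * (d0 * d1)) * ((d1 - d0) ^+ 2 / D ^+ 2).
  by rewrite /D; field; rewrite -/D D0.
rewrite mulNr oppr_le0; apply: mulr_ge0; first by apply: mulr_ge0 => //; nra.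
by apply: divr_ge0; rewrite ?sqr_ge0.
Qed.

Lemma int_slope_err (w1 w2 d0 d1 g e : R) : 0 < w1 -> 0 < w2 ->
  `|d0 - g| <= e -> `|d1 - g| <= e ->
  `|(if 0 < d0 * d1 then (w1 + w2) / (w1 / d0 + w2 / d1) else 0) - g| <= e.
Proof.
move=> p1 p2 /absP/andP[e1 e2] /absP/andP[e3 e4].
case: ifP => pd.
  have := hm_between p1 p2 pd; set v := (_ / _) => hv.
  apply: absI; rewrite leNgt; apply/negP => hh.
    have q1 : 0 < d0 - v by lra.
    have q2 : 0 < d1 - v by lra.
    have := mulr_gt0 q1 q2; nra.
  have q1 : 0 < v - d0 by lra.
  have q2 : 0 < v - d1 by lra.
  have := mulr_gt0 q1 q2; nra.
move/negbT: pd; rewrite -leNgt => pd.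
apply: absI; nra.
Qed.

End Alg.
Section An.
Variable R : realType.
Variables (a b M : R) (G G' : R -> R).
Hypothesis Gc : {within `[a, b], continuous G}.
Hypothesis Gd : forall x, x \in `]a, b[ -> is_derive x (1:R) G (G' x).
Hypothesis GM : forall x, x \in `[a, b] -> `|G' x| <= M.

Lemma mvt_sub {x y : R} : x \in `[a, b] -> y \in `[a, b] -> x < y ->
  exists2 c, c \in `]x, y[%R & G y - G x = G' c * (y - x).
Proof.
rewrite ?in_itv /= ?inE /= ?in_itv /= => /andP[ax xb] /andP[ay yb] xy.
apply: MVT => //.
  move=> z; rewrite ?in_itv /= ?inE /= ?in_itv /= => /andP[xz zy]; apply: Gd.
  by rewrite ?in_itv /= ?inE /= ?in_itv /=; apply/andP; split; lra.
apply: (continuous_subspaceW _ Gc) => z /=; rewrite ?in_itv /= ?inE /= ?in_itv /= => /andP[? ?].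
by rewrite ?in_itv /= ?inE /= ?in_itv /=; rewrite ?in_itv /= ?inE /= ?in_itv /=; apply/andP; split; lra.
Qed.

Lemma lip {x y : R} : x \in `[a, b] -> y \in `[a, b] -> `|G y - G x| <= M * `|y - x|.
Proof.
move=> xab yab.
have [xy|yx|->] := ltrgtP x y; last by rewrite subrr normr0 mulr0.
- have [c cxy ->] := mvt_sub xab yab xy.
  rewrite normrM (gtr0_norm (_ : 0 < y - x)); last by rewrite subr_gt0.
  apply: ler_wpM2r; first by rewrite subr_ge0 ltW.
  apply: GM; move: cxy xab yab; rewrite ?in_itv /= ?inE /= ?in_itv /= => /andP[? ?] /andP[? ?] /andP[? ?].
  by apply/andP; split; lra.
- have [c cxy hc] := mvt_sub yab xab yx.
  rewrite -normrN opprB hc normrM (gtr0_norm (_ : 0 < x - y)); last by rewrite subr_gt0.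
  apply: ler_wpM2r; first by rewrite subr_ge0 ltW.
  apply: GM; move: cxy xab yab; rewrite ?in_itv /= ?inE /= ?in_itv /= => /andP[? ?] /andP[? ?] /andP[? ?].
  by apply/andP; split; lra.
Qed.

End An.
Arguments mvt_sub {R a b G G'} Gc Gd {x y}.
Arguments lip {R a b M G G'} Gc Gd GM {x y}.

Section An2.
Variable R : realType.
Variables (a b M : R) (F F1 F2 : R -> R).
Hypothesis Fc : {within `[a, b], continuous F}.
Hypothesis F1c : {within `[a, b], continuous F1}.
Hypothesis Fd : forall x, x \in `]a, b[ -> is_derive x (1:R) F (F1 x).
Hypothesis F1d : forall x, x \in `]a, b[ -> is_derive x (1:R) F1 (F2 x).
Hypothesis FM : forall x, x \in `[a, b] -> `|F2 x| <= M.

Lemma secant_err x y z : x \in `[a, b] -> y \in `[a, b] -> z \in `[a, b] -> x < y ->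
  `|(F y - F x) / (y - x) - F1 z| <= M * (`|x - z| + `|y - z|).
Proof.
move=> xab yab zab xy.
have [c cxy ->] := mvt_sub Fc Fd xab yab xy.
have yx0 : y - x != 0 by apply/eqP => h; lra.
rewrite mulfK //.
have cab : c \in `[a, b].
  by move: cxy xab yab; rewrite ?in_itv /= ?inE /= ?in_itv /= => /andP[? ?] /andP[? ?] /andP[? ?]; rewrite ?in_itv /= ?inE /= ?in_itv /=; apply/andP; split; lra.
apply: (le_trans (lip F1c F1d FM zab cab)).
have M0 : 0 <= M by have := FM _ zab; have := normr_ge0 (F2 z); lra.
apply: ler_wpM2l => //.
move: cxy; rewrite ?in_itv /= ?inE /= ?in_itv /= => /andP[xc cy].
have h1 := ler_norm (y - z).
have h2 := ler_norm (z - x); rewrite -normrN opprB in h2.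
have h3 := normr_ge0 (x - z); have h4 := normr_ge0 (y - z).
rewrite ler_norml; apply/andP; split; lra.
Qed.

Lemma taylor_err x y : x \in `[a, b] -> y \in `[a, b] ->
  `|F y - F x - F1 x * (y - x)| <= M * (y - x) ^+ 2.
Proof.
move=> xab yab.
have M0 : 0 <= M by have := FM _ xab; have := normr_ge0 (F2 x); lra.
have [xy|yx|->] := ltrgtP x y; last by rewrite !subrr mulr0 subrr normr0 expr0n /= mulr0.
- have [c cxy ->] := mvt_sub Fc Fd xab yab xy.
  have cab : c \in `[a, b].
    by move: cxy xab yab; rewrite ?in_itv /= ?inE /= ?in_itv /= => /andP[? ?] /andP[? ?] /andP[? ?]; rewrite ?in_itv /= ?inE /= ?in_itv /=; apply/andP; split; lra.
  rewrite -mulrBl normrM.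
  have h1 := lip F1c F1d FM xab cab.
  move: cxy; rewrite ?in_itv /= ?inE /= ?in_itv /= => /andP[xc cy].
  rewrite (ger0_norm (_ : 0 <= y - x)); last lra.
  rewrite (ger0_norm (_ : 0 <= c - x)) in h1; last lra.
  rewrite expr2 mulrA; apply: ler_wpM2r; first lra.
  apply: (le_trans h1); apply: ler_wpM2l => //; lra.
- have [c cxy hc] := mvt_sub Fc Fd yab xab yx.
  have cab : c \in `[a, b].
    by move: cxy xab yab; rewrite ?in_itv /= ?inE /= ?in_itv /= => /andP[? ?] /andP[? ?] /andP[? ?]; rewrite ?in_itv /= ?inE /= ?in_itv /=; apply/andP; split; lra.
  have -> : F y - F x - F1 x * (y - x) = (F1 x - F1 c) * (x - y).
    by rewrite -[F y - F x]opprB hc; ring.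
  rewrite normrM.
  have h1 := lip F1c F1d FM cab xab.
  move: cxy; rewrite ?in_itv /= ?inE /= ?in_itv /= => /andP[yc cx].
  rewrite (ger0_norm (_ : 0 <= x - y)); last lra.
  rewrite (ger0_norm (_ : 0 <= x - c)) in h1; last lra.
  rewrite (_ : (y - x) ^+ 2 = (x - y) ^+ 2); last by ring.
  rewrite expr2 mulrA; apply: ler_wpM2r; first lra.
  apply: (le_trans h1); apply: ler_wpM2l => //; lra.
Qed.

End An2.
Section Grid.
Variable R : realType.
Variables (a b : R) (n : nat) (t : nat -> R).
Hypothesis G : is_grid a b n t.

Lemma grid_n0 : (0 < n)%N. Proof. by case: G. Qed.
Lemma grid_t0 : t 0%N = a. Proof. by case: G => _ []. Qed.
Lemma grid_tn : t n = b. Proof. by case: G => _ [] _ []. Qed.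
Lemma grid_inc {j} : (j < n)%N -> t j < t j.+1. Proof. by case: G => _ [] _ [] _; apply. Qed.

Lemma grid_le i k : (i <= k)%N -> (k <= n)%N -> t i <= t k.
Proof.
move=> ik kn; elim: k ik kn => [|k IH] ik kn.
  by have -> : i = 0%N by lia.
have [->|ik'] := eqVneq i k.+1; first by [].
have h1 : (i <= k)%N by lia.
apply: (le_trans (IH h1 _)); first by lia.
apply: ltW; apply: grid_inc; lia.
Qed.

Lemma grid_in {j} : (j <= n)%N -> t j \in `[a, b].
Proof.
move=> jn; rewrite inE /= in_itv /=; apply/andP; split.
  by rewrite -grid_t0; apply: grid_le.
by rewrite -grid_tn; apply: grid_le.
Qed.

Lemma hstep_gt0 {j} : (j < n)%N -> 0 < hstep t j.
Proof. by move=> jn; rewrite /hstep subr_gt0; apply: grid_inc. Qed.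

Lemma hstep_le {j} : (j < n)%N -> hstep t j <= maxstep n t.
Proof.
move=> jn; rewrite /maxstep.
exact: (le_bigmax _ (fun j : 'I_n => hstep t j) (Ordinal jn)).
Qed.

Lemma maxstep_gt0 : 0 < maxstep n t.
Proof. have h := grid_n0; exact: lt_le_trans (hstep_gt0 h) (hstep_le h). Qed.

Lemma cell_aux x : x \in `[a, b] -> forall m, (m.+1 <= n)%N ->
  let S := (\sum_(1 <= k < m.+1) nat_of_bool (t k <= x)%R)%N in
  (S = m /\ t m <= x) \/ ((S < m)%N /\ t S <= x < t S.+1).
Proof.
rewrite inE /= in_itv /= => /andP[ax xb].
elim => [|m IH] mn /=.
  by left; rewrite big_geq // grid_t0.
rewrite big_nat_recr //=.
have [[-> tm]|[Sm /andP[h1 h2]]] := IH (ltnW mn).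
  case: (boolP (t m.+1 <= x)) => h /=.
    by left; split => //; lia.
  right; rewrite addn0; split; first by lia.
  by rewrite tm /=; rewrite leNgt negbK in h.
set S := (\sum_(_ <= _ < _) _)%N in Sm h1 h2 *.
have : t S.+1 <= t m.+1 by apply: grid_le; lia.
move=> h3.
have -> : (t m.+1 <= x) = false by apply/negbTE; rewrite -ltNge; lra.
right; rewrite addn0; split; first by lia.
by rewrite h1 h2.
Qed.

Lemma cell_spec x : x \in `[a, b] ->
  [/\ (cell n t x < n)%N, t (cell n t x) <= x & x <= t (cell n t x).+1].
Proof.
move=> xab; have n0 := grid_n0.
have := @cell_aux x xab n.-1; rewrite prednK //; move/(_ (leqnn n)).
rewrite /cell.
move: xab; rewrite inE /= in_itv /= => /andP[ax xb].
case=> [[-> h]|[h /andP[h1 h2]]].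
  split => //; first by lia.
  by rewrite prednK // grid_tn.
by split => //; [lia|apply: ltW].
Qed.

End Grid.
Section Herm.
Variable R : realType.

Lemma norm4 (p1 p2 p3 p4 : R) : `|p1 + p2 + p3 - p4| <= `|p1| + `|p2| + `|p3| + `|p4|.
Proof.
apply: (le_trans (ler_normB _ _)); rewrite lerD2r.
apply: (le_trans (ler_normD _ _)); rewrite lerD2r.
exact: ler_normD.
Qed.

Lemma normM_le {x y c d : R} : `|x| <= c -> `|y| <= d -> `|x * y| <= c * d.
Proof. by move=> h1 h2; rewrite normrM; apply: ler_pM. Qed.

Lemma herm_err (u hj h y0 y1 g0 m0 m1 Fx M : R) :
 0 <= u <= 1 -> 0 < hj -> hj <= h -> 0 <= M ->
 `|y1 - y0 - g0 * hj| <= M * hj ^+ 2 -> `|Fx - y0 - g0 * (u * hj)| <= M * hj ^+ 2 ->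
 `|m0 - g0| <= 21 * (M * h) -> `|m1 - g0| <= 21 * (M * h) ->
 `|(2 * u ^+ 3 - 3 * u ^+ 2 + 1) * y0 + (u ^+ 3 - 2 * u ^+ 2 + u) * hj * m0
    + (- 2 * u ^+ 3 + 3 * u ^+ 2) * y1 + (u ^+ 3 - u ^+ 2) * hj * m1 - Fx|
   <= 50 * M * h ^+ 2.
Proof.
move=> /andP[u0 u1] hj0 hjh M0 r1 r2 e0 e1.
set R1 := y1 - y0 - g0 * hj in r1; set R2 := Fx - y0 - g0 * (u * hj) in r2.
have -> : (2 * u ^+ 3 - 3 * u ^+ 2 + 1) * y0 + (u ^+ 3 - 2 * u ^+ 2 + u) * hj * m0
    + (- 2 * u ^+ 3 + 3 * u ^+ 2) * y1 + (u ^+ 3 - u ^+ 2) * hj * m1 - Fx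
  = (u ^+ 2 * (3 - 2 * u)) * R1 + (u * (1 - u) ^+ 2) * (hj * (m0 - g0))
    + (- (u ^+ 2 * (1 - u))) * (hj * (m1 - g0)) - R2 by rewrite /R1 /R2; ring.
have hA : `|u ^+ 2 * (3 - 2 * u)| <= 1.
  rewrite ger0_norm; last by apply: mulr_ge0; [exact: sqr_ge0|lra].
  rewrite -subr_ge0 (_ : 1 - _ = (1 - u) ^+ 2 * (1 + 2 * u)); last by ring.
  by apply: mulr_ge0; [exact: sqr_ge0|lra].
have hB : `|u * (1 - u) ^+ 2| <= 1.
  rewrite ger0_norm; last by apply: mulr_ge0; [lra|exact: sqr_ge0].
  apply: (@le_trans _ _ (1 * 1)); last by rewrite mulr1.
  apply: ler_pM => //; [exact: sqr_ge0|rewrite expr2; nra].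
have hC : `|- (u ^+ 2 * (1 - u))| <= 1.
  rewrite normrN ger0_norm; last by apply: mulr_ge0; [exact: sqr_ge0|lra].
  apply: (@le_trans _ _ (1 * 1)); last by rewrite mulr1.
  apply: ler_pM => //; [exact: sqr_ge0|lra|rewrite expr2; nra|lra].
have hd0 : `|hj * (m0 - g0)| <= hj * (21 * (M * h)).
  by apply: normM_le => //; rewrite ger0_norm //; exact: ltW.
have hd1 : `|hj * (m1 - g0)| <= hj * (21 * (M * h)).
  by apply: normM_le => //; rewrite ger0_norm //; exact: ltW.
apply: (le_trans (norm4 _ _ _ _)).
have q1 := normM_le hA r1.
have q2 := normM_le hB hd0.
have q3 := normM_le hC hd1.
have s1 : M * hj ^+ 2 <= M * h ^+ 2.
  by apply: ler_wpM2l => //; rewrite !expr2; apply: ler_pM => //; exact: ltW.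
have s2 : hj * (21 * (M * h)) <= 21 * (M * h ^+ 2).
  rewrite (_ : 21 * (M * h ^+ 2) = h * (21 * (M * h))); last by rewrite expr2; ring.
  apply: ler_wpM2r => //; apply: mulr_ge0 => //; apply: mulr_ge0 => //; lra.
have : 0 <= M * h ^+ 2 by apply: mulr_ge0 => //; exact: sqr_ge0.
rewrite !mul1r in q1 q2 q3; rewrite -(mulrA 50 M); lra.
Qed.

Lemma lin_err (u hj h y0 y1 g0 Fx M : R) :
 0 <= u <= 1 -> 0 < hj -> hj <= h -> 0 <= M ->
 `|y1 - y0 - g0 * hj| <= M * hj ^+ 2 -> `|Fx - y0 - g0 * (u * hj)| <= M * hj ^+ 2 ->
 `|y0 + u * (y1 - y0) - Fx| <= 50 * M * h ^+ 2.
Proof.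
move=> /andP[u0 u1] hj0 hjh M0 r1 r2.
set R1 := y1 - y0 - g0 * hj in r1; set R2 := Fx - y0 - g0 * (u * hj) in r2.
have -> : y0 + u * (y1 - y0) - Fx = u * R1 - R2 by rewrite /R1 /R2; ring.
have hu : `|u| <= 1 by rewrite ger0_norm.
have q1 := normM_le hu r1.
have s1 : M * hj ^+ 2 <= M * h ^+ 2.
  by apply: ler_wpM2l => //; rewrite !expr2; apply: ler_pM => //; exact: ltW.
have := normr_ge0 (u * R1).
have := normr_ge0 R2.
have := ler_normB (u * R1) R2.
have : 0 <= M * h ^+ 2 by apply: mulr_ge0 => //; exact: sqr_ge0.
rewrite mul1r in q1; rewrite -mulrA; lra.
Qed.

End Herm.
Arguments grid_in {R a b n t} G {j}.
Arguments grid_inc {R a b n t} G {j}.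
Arguments hstep_gt0 {R a b n t} G {j}.
Arguments hstep_le {R n t} {j}.
Arguments grid_le {R a b n t} G i k.
Arguments maxstep_gt0 {R a b n t} G.
Arguments cell_spec {R a b n t} G x.
Arguments grid_t0 {R a b n t} G.
Arguments grid_tn {R a b n t} G.
Arguments grid_n0 {R a b n t} G.

Section Main.
Variable R : realType.
Variables (a b M : R) (F F1 F2 : R -> R) (n : nat) (t : nat -> R).
Hypothesis Fc : {within `[a, b], continuous F}.
Hypothesis F1c : {within `[a, b], continuous F1}.
Hypothesis Fd : forall x, x \in `]a, b[ -> is_derive x (1:R) F (F1 x).
Hypothesis F1d : forall x, x \in `]a, b[ -> is_derive x (1:R) F1 (F2 x).
Hypothesis FM : forall x, x \in `[a, b] -> `|F2 x| <= M.
Hypothesis Gr : is_grid a b n t.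

Local Notation h := (maxstep n t).

Lemma M_ge0 : 0 <= M.
Proof.
have ab : a \in `[a, b] by have := grid_in Gr (j:=0) (leq0n _); rewrite (grid_t0 Gr).
by have := FM _ ab; have := normr_ge0 (F2 a); lra.
Qed.

Lemma sec_b {i z} : (i < n)%N -> z \in `[a, b] ->
  `|secant t F i - F1 z| <= M * (`|t i - z| + `|t i.+1 - z|).
Proof.
move=> iN zab; apply: (@secant_err R a b M F F1 F2) => //.
- by apply: (grid_in Gr); lia.
- by apply: (grid_in Gr); lia.
- exact: (grid_inc Gr).
Qed.

Lemma dist1 {i k} : (i <= k)%N -> (k <= n)%N -> `|t i - t k| = t k - t i.
Proof. by move=> ik kn; rewrite distrC ger0_norm // subr_ge0; apply: (grid_le Gr). Qed.

Lemma dist2 {i k} : (i <= k)%N -> (k <= n)%N -> `|t k - t i| = t k - t i.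
Proof. by move=> ik kn; rewrite ger0_norm // subr_ge0; apply: (grid_le Gr). Qed.

Lemma dist0 i : `|t i - t i| = 0.
Proof. by rewrite subrr normr0. Qed.

Lemma hb {i} : (i < n)%N -> t i.+1 - t i <= h.
Proof. exact: hstep_le. Qed.

Lemma hp {i} : (i < n)%N -> 0 < t i.+1 - t i.
Proof. exact: (hstep_gt0 Gr). Qed.

Lemma slope_err {j} : (j <= n)%N -> `|pchip_slope n t F j - F1 (t j)| <= 20 * (M * h).
Proof.
move=> jn.
have M0 := M_ge0; have h0 := maxstep_gt0 Gr; have n0 := grid_n0 Gr.
have Mh0 : 0 <= M * h by apply: mulr_ge0 => //; exact: ltW.
rewrite /pchip_slope.
have [n1|n1] := eqVneq n 1%N.

  have tj : t j \in `[a, b] by exact: (grid_in Gr).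
  apply: (le_trans (sec_b _ tj)); first by lia.
  have hb0 := hb (i:=0) n0.
  have [->|j1] := eqVneq j 0%N.
    rewrite dist0 (dist2 (i:=0) (k:=1)) //; try lia.
    rewrite [20 * _]mulrCA; apply: ler_wpM2l => //; lra.
  have -> : j = 1%N by lia.
  rewrite dist0 (dist1 (i:=0) (k:=1)) //; try lia.
  rewrite [20 * _]mulrCA; apply: ler_wpM2l => //; lra.

have n2 : (2 <= n)%N by lia.
have [->|j0] := eqVneq j 0%N.
  apply: end_slope_err.
  - by apply: hp; lia.
  - by apply: hp; lia.
  - apply: (le_trans (sec_b _ (grid_in Gr (j:=0) _))); try lia.
    rewrite dist0 dist2 //; try lia.
    have := hb (i:=0) n0; rewrite add0r; apply: ler_wpM2l => //.
  - apply: (le_trans (sec_b _ (grid_in Gr (j:=0) _))); try lia.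
    rewrite !dist2 //; try lia.
    have := hb (i:=0) n0; have := hb (i:=1) n2.
    move=> q1 q2; rewrite mulrCA; apply: ler_wpM2l => //; lra.

have [jE|jn'] := eqVneq j n.
  rewrite jE.
  have [p hpn] : exists p, n = p.+2 by exists n.-2; lia.
  have -> : n.-1 = p.+1 by lia.
  rewrite /=.
  have -> : t n = t p.+2 by rewrite -hpn.
  apply: end_slope_err.
  - by apply: hp; lia.
  - by apply: hp; lia.
  - apply: (le_trans (sec_b _ (grid_in Gr (j:=p.+2) _))); try lia.
    rewrite dist0 dist1 //; try lia.
    have q : t p.+2 - t p.+1 <= h by apply: hb; lia.
    by rewrite addr0; apply: ler_wpM2l => //.
  - apply: (le_trans (sec_b _ (grid_in Gr (j:=p.+2) _))); try lia.
    rewrite !dist1 //; try lia.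
    have q1 : t p.+2 - t p.+1 <= h by apply: hb; lia.
    have q2 : t p.+1 - t p <= h by apply: hb; lia.
    rewrite mulrCA; apply: ler_wpM2l => //; lra.

have [j' jE] : exists j', j = j'.+1 by exists j.-1; lia.
rewrite jE /fc_interior_slope /=.
have hj' : 0 < t j'.+1 - t j' by apply: hp; lia.
have hj : 0 < t j'.+2 - t j'.+1 by apply: hp; lia.
have bj' : t j'.+1 - t j' <= h by apply: hb; lia.
have bj : t j'.+2 - t j'.+1 <= h by apply: hb; lia.
apply: (@le_trans _ _ (M * h)); last by lra.
apply: int_slope_err.
- rewrite /hstep; lra.
- rewrite /hstep; lra.
- apply: (le_trans (sec_b _ (grid_in Gr (j:=j'.+1) _))); try lia.
  rewrite dist0 dist1 //; try lia.
  by rewrite addr0; apply: ler_wpM2l => //.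
- apply: (le_trans (sec_b _ (grid_in Gr (j:=j'.+1) _))); try lia.
  rewrite dist0 dist2 //; try lia.
  by rewrite add0r; apply: ler_wpM2l => //.

Qed.

Lemma interp_err s x : x \in `[a, b] ->
  `|interp s n t F x - F x| <= 50 * M * h ^+ 2.
Proof.
move=> xab; have [jn tjx xtj] := cell_spec Gr x xab.
have M0 := M_ge0; have h0 := maxstep_gt0 Gr.
have Mh0 : 0 <= M * h by apply: mulr_ge0 => //; exact: ltW.
set j := cell n t x in jn tjx xtj *.
have hj0 : 0 < hstep t j by apply: hp.
have hjh : hstep t j <= h by apply: hb.
have tj : t j \in `[a, b] by apply: (grid_in Gr); exact: ltnW.
have tj1 : t j.+1 \in `[a, b] by apply: (grid_in Gr).
set u := (x - t j) / hstep t j.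
have uh : u * hstep t j = x - t j by rewrite /u divfK // gt_eqF.
have u01 : 0 <= u <= 1.
  apply/andP; split; first by rewrite /u divr_ge0 //; [lra|exact: ltW].
  by rewrite /u ler_pdivrMr // mul1r /hstep; lra.
have r1 : `|F (t j.+1) - F (t j) - F1 (t j) * hstep t j| <= M * hstep t j ^+ 2.
  exact: (@taylor_err R a b M F F1 F2).
have r2 : `|F x - F (t j) - F1 (t j) * (u * hstep t j)| <= M * hstep t j ^+ 2.
  rewrite uh; apply: (le_trans (@taylor_err R a b M F F1 F2 _ _ _ _ _ _ _ tj xab)) => //.
  apply: ler_wpM2l => //; rewrite /hstep !expr2; apply: ler_pM; lra.
case: s => /=.
  rewrite /pwlinear -/j -/u.
  exact: (@lin_err _ _ _ _ _ _ _ _ _ u01 hj0 hjh M0 r1 r2).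
rewrite /pchip -/j -/u.
apply: (@herm_err _ _ _ _ _ _ _ _ _ _ _ u01 hj0 hjh M0 r1 r2).
  apply: (le_trans (slope_err (ltnW jn))); lra.
have e1 := slope_err (j := j.+1) jn.
have e2 := @lip R a b M F1 F2 F1c F1d FM _ _ tj tj1.
rewrite (_ : pchip_slope n t F j.+1 - F1 (t j) =
   (pchip_slope n t F j.+1 - F1 (t j.+1)) + (F1 (t j.+1) - F1 (t j))); last by ring.
apply: (le_trans (ler_normD _ _)).
have : M * `|t j.+1 - t j| <= M * h.
  by apply: ler_wpM2l => //; rewrite ger0_norm; [exact: hjh|exact: ltW].
lra.
Qed.

End Main.
Section Meas.
Variable R : realType.

Lemma sum_ind_meas (f : nat -> R) (r : seq nat) (j : nat) :
  measurable [set x : R | (\sum_(k <- r) nat_of_bool (f k <= x)%R)%N = j].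
Proof.
elim: r j => [|i r IH] j.
  case: j => [|j].
    by rewrite (_ : [set x | _] = setT) //; apply/seteqP; split => x //=; rewrite big_nil.
  by rewrite (_ : [set x | _] = set0) //; apply/seteqP; split => x //=; rewrite big_nil.
have mi : measurable [set x : R | f i <= x].
  by rewrite (_ : [set x | _] = `[f i, +oo[%classic) //; apply/seteqP; split => x /=;
    rewrite in_itv /= andbT.
case: j => [|j].
  rewrite (_ : [set x | _] = ~` [set x : R | f i <= x] `&` [set x | (\sum_(k <- r) nat_of_bool (f k <= x)%R)%N = 0%N]).
    by apply: measurableI => //; apply: measurableC.
  apply/seteqP; split => x /=; rewrite big_cons.
    by case: (f i <= x) => /=; lia.
  by case=> /negP/negbTE -> /=.
rewrite (_ : [set x | _] = ([set x : R | f i <= x] `&` [set x | (\sum_(k <- r) nat_of_bool (f k <= x)%R)%N = j]) `|`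
   (~` [set x : R | f i <= x] `&` [set x | (\sum_(k <- r) nat_of_bool (f k <= x)%R)%N = j.+1])).
  by apply: measurableU; apply: measurableI => //; apply: measurableC.
apply/seteqP; split => x /=; rewrite big_cons.
  by case: (f i <= x) => /= h; [left|right]; split => //; lia.
by case=> -[h1 h2]; [rewrite h1|move/negP/negbTE: h1 => ->]; rewrite /= h2.
Qed.

Lemma cell_meas n (t : nat -> R) j : measurable [set x : R | cell n t x = j].
Proof. exact: sum_ind_meas. Qed.

Lemma glue_meas (c : R -> nat) (g : nat -> R -> R) :
  (forall j, measurable [set x | c x = j]) -> (forall j, measurable_fun setT (g j)) ->
  measurable_fun setT (fun x => g (c x) x).
Proof.
move=> mc mg _ B mB; rewrite setTI.
rewrite (_ : _ @^-1` B = \bigcup_j ([set x | c x = j] `&` (g j @^-1` B))).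
  apply: bigcupT_measurable => j; rewrite -[_ @^-1` _]setTI.
  by apply: measurableI => //; apply: mg.
apply/seteqP; split => x /=.
  by move=> hB; exists (c x) => //.
by move=> [j _ [<-]].
Qed.

End Meas.

Ltac mf := repeat first [ apply: measurable_funD | apply: measurable_funB
   | apply: measurable_funM | apply: measurable_funX | apply: measurable_funN | apply: measurable_cst
   | apply: measurable_id ].

Section Meas2.
Variable R : realType.

Lemma interp_meas s n (t : nat -> R) F : measurable_fun setT (interp s n t F).
Proof.
case: s => /=.
  apply: (@glue_meas R (cell n t)
    (fun j x => F (t j) + (x - t j) / hstep t j * (F (t j.+1) - F (t j)))).
    exact: cell_meas.
  by move=> j; mf.
apply: (@glue_meas R (cell n t)
  (fun j x => let hj := hstep t j in let u := (x - t j) / hj in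
  (2 * u ^+ 3 - 3 * u ^+ 2 + 1) * F (t j)
  + (u ^+ 3 - 2 * u ^+ 2 + u) * hj * pchip_slope n t F j
  + (- 2 * u ^+ 3 + 3 * u ^+ 2) * F (t j.+1)
  + (u ^+ 3 - u ^+ 2) * hj * pchip_slope n t F j.+1)).
  exact: cell_meas.
by move=> j; cbv zeta; mf.
Qed.

Lemma clamp_meas (a b : R) : measurable_fun setT (clamp a b).
Proof.
rewrite (_ : clamp a b = ((id \max cst a) \min cst b)%R); last by apply/funext.
apply: measurable_minr; last exact: measurable_cst.
apply: measurable_maxr; [exact: measurable_id|exact: measurable_cst].
Qed.

Lemma clamp_in (a b x : R) : a <= b -> clamp a b x \in `[a, b].
Proof.
move=> ab; rewrite /clamp inE /= in_itv /=; apply/andP; split.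
  by rewrite le_min ab le_max lexx orbT.
by rewrite ge_min lexx orbT.
Qed.

Lemma clampext_meas (a b : R) G : a <= b -> measurable_fun `[a, b] G ->
  measurable_fun setT (clampext a b G).
Proof.
move=> ab mG; rewrite /clampext.
apply: (measurable_comp (F := `[a, b]) (f := G) (g := clamp a b)).
- exact: measurable_itv.
- by move=> _ [x _ <-]; exact: set_mem (clamp_in _ _ x ab).
- exact: mG.
- exact: clamp_meas.
Qed.

Lemma cont_meas (a b : R) (F : R -> R) : {within `[a, b], continuous F} -> measurable_fun `[a, b] F.
Proof. move=> Fc; apply: subspace_continuous_measurable_fun => //; exact: measurable_itv. Qed.

End Meas2.
Lemma measurable_cosR (R : realType) : measurable_fun [set: R] cos.
Proof. by apply: continuous_measurable_fun; exact: continuous_cos. Qed.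
Lemma measurable_sinR (R : realType) : measurable_fun [set: R] sin.
Proof. by apply: continuous_measurable_fun; exact: continuous_sin. Qed.

Section Int.
Variable R : realType.
Variable mu : {measure set R -> \bar R}.
Local Notation Dp := (`]0%R, +oo[ : set R).
Hypothesis mu1 : mu Dp = 1%E.
Variables (delta c lam beta : R).
Let E := fun x : R => expR (delta * x).
Hypothesis Eint : mu.-integrable Dp (EFin \o E).

Let mD : measurable (Dp : set R).
Proof. exact: measurable_itv. Qed.

Lemma cst_int k : mu.-integrable Dp (EFin \o cst k).
Proof.
apply/integrableP; split; first exact/measurable_EFinP/measurable_cst.
rewrite (_ : (fun x => _) = cst `|k%:E|%E) //.
by rewrite integral_cst // mu1 mule1 /= ltry.
Qed.

Lemma intZ k f : mu.-integrable Dp (EFin \o f) ->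
  mu.-integrable Dp (EFin \o (fun x => k * f x)).
Proof.
move=> fi; have := integrableZl mD k fi.
by rewrite (_ : (fun x => _) = EFin \o (fun x => k * f x)) //; apply/funext => x /=; rewrite EFinM.
Qed.

Lemma intD f g : mu.-integrable Dp (EFin \o f) ->
  mu.-integrable Dp (EFin \o g) ->
  mu.-integrable Dp (EFin \o (fun x => f x + g x)).
Proof.
move=> fi gi; have := integrableD mD fi gi.
by rewrite (_ : (_ \+ _)%E = EFin \o (fun x => f x + g x)) //; apply/funext => x /=; rewrite EFinD.
Qed.

Lemma E_meas : measurable_fun setT E.
Proof. apply: measurableT_comp; first exact: measurable_expR. by mf. Qed.

Lemma bound_int (f : R -> R) (B : R) : measurable_fun Dp f ->
  (forall x, `|f x| <= B * E x + B) -> mu.-integrable Dp (EFin \o f).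
Proof.
move=> mf fB.
apply: (le_integrable mD (g := EFin \o (fun x => B * E x + B))).
- exact/measurable_EFinP.
- move=> x _ /=; rewrite lee_fin; apply: (le_trans (fB x)); exact: ler_norm.
- by apply: intD; [apply: intZ|exact: cst_int].
Qed.

Lemma PQint (Df : R -> R) (S : R) : measurable_fun setT Df -> (forall y, `|Df y| <= S) ->
  mu.-integrable Dp (EFin \o (fun x => expR (delta * x) * cos (c * x) * Df (lam + beta * x) - Df lam)) /\
  mu.-integrable Dp (EFin \o (fun x => expR (delta * x) * sin (c * x) * Df (lam + beta * x))).
Proof.
move=> mDf DfS.
have mAff : measurable_fun setT (fun x => Df (lam + beta * x)).
  by apply: (measurableT_comp (f := Df) (g := fun x => lam + beta * x)) => //; mf.
have mE := E_meas.
have mcos : measurable_fun setT (fun x => cos (c * x)).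
  by apply: (measurableT_comp (f := cos) (g := fun x => c * x)); [exact: measurable_cosR|mf].
have msin : measurable_fun setT (fun x => sin (c * x)).
  by apply: (measurableT_comp (f := sin) (g := fun x => c * x)); [exact: measurable_sinR|mf].
split.
  apply: (bound_int _ S).
    apply: (measurable_funS (E := setT)) => //.
    by apply: measurable_funB; [apply: measurable_funM; [apply: measurable_funM|]|exact: measurable_cst].
  move=> x; apply: (le_trans (ler_normB _ _)); apply: lerD => //.
  rewrite normrM normrM (ger0_norm (expR_ge0 _)).
  apply: (@le_trans _ _ (expR (delta * x) * 1 * S)); last by rewrite mulr1 mulrC.
  apply: ler_pM; [apply: mulr_ge0; [exact: expR_ge0|exact: normr_ge0]|exact: normr_ge0
    |apply: ler_wpM2l; [exact: expR_ge0|exact: cos_max]|exact: DfS].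
apply: (bound_int _ S).
  apply: (measurable_funS (E := setT)) => //.
  by apply: measurable_funM; [apply: measurable_funM|].
move=> x.
rewrite normrM normrM (ger0_norm (expR_ge0 _)).
apply: (@le_trans _ _ (expR (delta * x) * 1 * S)); last first.
  by rewrite mulr1 mulrC lerDl; apply: le_trans (normr_ge0 _) (DfS 0).
apply: ler_pM; [apply: mulr_ge0; [exact: expR_ge0|exact: normr_ge0]|exact: normr_ge0
  |apply: ler_wpM2l; [exact: expR_ge0|exact: sin_max]|exact: DfS].
Qed.

Lemma pointwise (A B r e co si d1 d0 S : R) : 0 <= r -> r ^+ 2 = A ^+ 2 + B ^+ 2 ->
  0 < e -> co ^+ 2 + si ^+ 2 = 1 ->
  `|co| <= 1 -> `|d1| <= S -> `|d0| <= S ->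
  A * (e * co * d1 - d0) + B * (e * si * d1) <= r * (S * e + S).
Proof.
move=> r0 hr2 e0 cs hco hd1 hd0.
set P := e * co * d1 - d0; set Q := e * si * d1.
have S0 : 0 <= S by apply: le_trans (normr_ge0 _) hd1.
have PQ : P ^+ 2 + Q ^+ 2 = e ^+ 2 * d1 ^+ 2 - 2 * (e * (co * d1 * d0)) + d0 ^+ 2.
  rewrite /P /Q.
  transitivity (e ^+ 2 * d1 ^+ 2 * (co ^+ 2 + si ^+ 2) - 2 * (e * (co * d1 * d0)) + d0 ^+ 2); first by ring.
  by rewrite cs mulr1.
have f3 : `|co * d1 * d0| <= 1 * S * S.
  by apply: normM_le => //; apply: normM_le.
move/absP/andP: hd1 => [d1a d1b]; move/absP/andP: hd0 => [d0a d0b].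
have f1 : d1 ^+ 2 <= S ^+ 2 by rewrite !expr2; nra.
have f2 : d0 ^+ 2 <= S ^+ 2 by rewrite !expr2; nra.
have f4 : - (e * (co * d1 * d0)) <= e * S ^+ 2.
  rewrite -mulrN expr2; apply: ler_wpM2l; first exact: ltW.
  have := ler_norm (- (co * d1 * d0)); rewrite normrN mul1r in f3 *; lra.
have f5 : e ^+ 2 * d1 ^+ 2 <= e ^+ 2 * S ^+ 2 by apply: ler_wpM2l => //; exact: sqr_ge0.
have PQb : P ^+ 2 + Q ^+ 2 <= (S * e + S) ^+ 2.
  rewrite PQ; have -> : (S * e + S) ^+ 2 = e ^+ 2 * S ^+ 2 + 2 * (e * S ^+ 2) + S ^+ 2 by ring.
  lra.
have CS : (A * P + B * Q) ^+ 2 <= (A ^+ 2 + B ^+ 2) * (P ^+ 2 + Q ^+ 2).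
  rewrite -subr_ge0 (_ : _ - _ = (A * Q - B * P) ^+ 2); last by ring.
  exact: sqr_ge0.
have RHS0 : 0 <= r * (S * e + S) by apply: mulr_ge0 => //; apply: addr_ge0 => //; apply: mulr_ge0 => //; exact: ltW.
have sq : (A * P + B * Q) ^+ 2 <= (r * (S * e + S)) ^+ 2.
  apply: (le_trans CS); rewrite [(r * _) ^+ 2]exprMn hr2; apply: ler_wpM2l => //.
  by apply: addr_ge0; exact: sqr_ge0.
rewrite leNgt; apply/negP => hlt.
have : (r * (S * e + S)) ^+ 2 < (A * P + B * Q) ^+ 2.
  by rewrite !expr2; apply: ltr_pM => //.
lra.
Qed.

Lemma key (Df : R -> R) (S : R) : measurable_fun setT Df -> (forall y, `|Df y| <= S) ->
  Num.sqrt ((\int[mu]_(x in Dp) (expR (delta * x) * cos (c * x) * Df (lam + beta * x) - Df lam)) ^+ 2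
          + (\int[mu]_(x in Dp) (expR (delta * x) * sin (c * x) * Df (lam + beta * x))) ^+ 2)
  <= S * (\int[mu]_(x in Dp) expR (delta * x) + 1).
Proof.
move=> mDf DfS.
have S0 : 0 <= S by apply: le_trans (normr_ge0 _) (DfS 0).
have mAff : measurable_fun setT (fun x => Df (lam + beta * x)).
  by apply: (measurableT_comp (f := Df) (g := fun x => lam + beta * x)) => //; mf.
have mE := E_meas.
have mcos : measurable_fun setT (fun x => cos (c * x)).
  by apply: (measurableT_comp (f := cos) (g := fun x => c * x)); [exact: measurable_cosR|mf].
have msin : measurable_fun setT (fun x => sin (c * x)).
  by apply: (measurableT_comp (f := sin) (g := fun x => c * x)); [exact: measurable_sinR|mf].
set P := fun x => expR (delta * x) * cos (c * x) * Df (lam + beta * x) - Df lam.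
set Q := fun x => expR (delta * x) * sin (c * x) * Df (lam + beta * x).
have iP : mu.-integrable Dp (EFin \o P).
  apply: (bound_int _ S).
    apply: (measurable_funS (E := setT)) => //.
    by apply: measurable_funB; [apply: measurable_funM; [apply: measurable_funM|]|exact: measurable_cst].
  move=> x; rewrite /P; apply: (le_trans (ler_normB _ _)); apply: lerD => //.
  rewrite normrM normrM (ger0_norm (expR_ge0 _)).
  apply: (@le_trans _ _ (expR (delta * x) * 1 * S)); last by rewrite mulr1 mulrC.
  apply: ler_pM; [apply: mulr_ge0; [exact: expR_ge0|exact: normr_ge0]|exact: normr_ge0
    |apply: ler_wpM2l; [exact: expR_ge0|exact: cos_max]|exact: DfS].
have iQ : mu.-integrable Dp (EFin \o Q).
  apply: (bound_int _ S).
    apply: (measurable_funS (E := setT)) => //.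
    by apply: measurable_funM; [apply: measurable_funM|].
  move=> x; rewrite /Q.
  rewrite normrM normrM (ger0_norm (expR_ge0 _)).
  apply: (@le_trans _ _ (expR (delta * x) * 1 * S)); last by rewrite mulr1 mulrC lerDl.
  apply: ler_pM; [apply: mulr_ge0; [exact: expR_ge0|exact: normr_ge0]|exact: normr_ge0
    |apply: ler_wpM2l; [exact: expR_ge0|exact: sin_max]|exact: DfS].
set A := \int[mu]_(x in Dp) P x; set B := \int[mu]_(x in Dp) Q x.
pose r : R := Num.sqrt (A ^+ 2 + B ^+ 2).
rewrite -/r.
have r0 : 0 <= r by exact: sqrtr_ge0.
have IE0 : 0 <= \int[mu]_(x in Dp) expR (delta * x).
  by apply: Rintegral_ge0 => x _; exact: expR_ge0.
have [r00|rpos] := eqVneq r 0.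
  by rewrite r00; apply: mulr_ge0 => //; lra.
have rp : 0 < r by rewrite lt_def rpos r0.
have hr2 : r ^+ 2 = A ^+ 2 + B ^+ 2 by rewrite sqr_sqrtr // addr_ge0 // sqr_ge0.
have k1 : A ^+ 2 + B ^+ 2 = \int[mu]_(x in Dp) (A * P x + B * Q x).
  rewrite RintegralD //; try by apply: intZ.
  by rewrite !RintegralZl // !expr2.
have k2 : \int[mu]_(x in Dp) (A * P x + B * Q x) <= \int[mu]_(x in Dp) (r * (S * expR (delta * x) + S)).
  apply: le_Rintegral => //.
  - by apply: intD; apply: intZ.
  - by apply: intZ; apply: intD; [apply: intZ|exact: cst_int].
  - move=> x _; rewrite /P /Q /=; apply: (pointwise _ _ _ _ _ _ _ _ _ r0 hr2) => //.
    + exact: expR_gt0.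
    + exact: cos2Dsin2.
    + exact: cos_max.
have k3 : \int[mu]_(x in Dp) (r * (S * expR (delta * x) + S))
    = r * (S * \int[mu]_(x in Dp) expR (delta * x) + S).
  rewrite RintegralZl //; last by apply: intD; [apply: intZ|exact: cst_int].
  rewrite RintegralD //; last exact: cst_int.
  - by rewrite RintegralZl // Rintegral_cst // mu1 /= mulr1.
  - exact: intZ.
have : r ^+ 2 <= r * (S * \int[mu]_(x in Dp) expR (delta * x) + S) by rewrite hr2 k1 -k3.
rewrite expr2 => h; rewrite mulrDr mulr1.
by rewrite -(ler_pM2l rp).
Qed.

End Int.
Lemma cmod_diff (R : realType) (l A1 B1 A2 B2 : R) : 0 <= l ->
  cmod ((l%:C * (A1 +i* B1) - l%:C * (A2 +i* B2))%C) = l * Num.sqrt ((A1 - A2) ^+ 2 + (B1 - B2) ^+ 2).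
Proof.
move=> l0; rewrite /cmod /=.
rewrite (_ : _ + _ = l ^+ 2 * ((A1 - A2) ^+ 2 + (B1 - B2) ^+ 2)); last by ring.
by rewrite sqrtrM ?sqr_ge0 // sqrtr_sqr ger0_norm.
Qed.

Lemma Nexp_parts (R : realType) (a b beta : R) (eta : R[i]) (nu : R -> {measure set R -> \bar R}) G lam :
  Nexp a b beta eta nu G lam = (lam%:C * (
    (\int[nu lam]_(x in (`]0%R, +oo[ : set R)) (expR (complex.Re eta * x) * cos (complex.Im eta * x)
        * clampext a b G (lam + beta * x) - clampext a b G lam)) +i*
    (\int[nu lam]_(x in (`]0%R, +oo[ : set R)) (expR (complex.Re eta * x) * sin (complex.Im eta * x)
        * clampext a b G (lam + beta * x)))))%C.
Proof.
rewrite /Nexp /cintegral; congr (_ * (_ +i* _))%C; apply: eq_Rintegral => x _ /=; ring.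
Qed.

Lemma bound_on {R : realType} {a b : R} {G : R -> R} : a <= b -> {within `[a, b], continuous G} ->
  exists B, forall x, x \in `[a, b] -> `|G x| <= B.
Proof.
move=> ab Gc.
have [cM _ GM] := EVT_max ab Gc.
have [cm _ Gm] := EVT_min ab Gc.
exists (`|G cM| + `|G cm|) => x; rewrite inE /= => xab.
have h1 := GM x xab; have h2 := Gm x xab.
have := ler_norm (G cM); have := ler_norm (- G cm); rewrite normrN.
have := normr_ge0 (G cM); have := normr_ge0 (G cm).
by move=> *; apply: absI; lra.
Qed.

Theorem mainTheorem13 (R : realType) (lmin lmax beta s0 : R)
    (nu : R.-pker R ~> R) (eta : R[i]) (F : R -> R) (s : scheme) :
  0 <= lmin -> lmin < lmax -> 0 <= beta -> 0 < s0 ->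
  (forall lam, lam \in `[lmin, lmax] -> nu lam `]0%R, +oo[ = 1%E) ->
  (forall s', 0 <= s' < s0 -> exists M : R, forall lam, lam \in `[lmin, lmax] ->
     (\int[nu lam]_(x in `]0%R, +oo[) (expR (s' * x))%:E <= M%:E)%E) ->
  complex.Re eta < s0 ->
  C2_on lmin lmax F ->
  let Cstar := ereal_sup [set (\int[nu lam]_(x in `]0%R, +oo[) (expR (complex.Re eta * x))%:E)%E
                          | lam in `[lmin, lmax]] in
  (Cstar < +oo)%E /\
  (forall (n : nat) (t : nat -> R), is_grid lmin lmax n t ->
     (csupnorm lmin lmax
        (fun lam => (Nexp lmin lmax beta eta nu (interp s n t F) lam
                     - Nexp lmin lmax beta eta nu F lam)%R)
      <= lmax%:E * (Cstar + 1%E) * supnorm lmin lmax (fun x => (interp s n t F x - F x)%R))%E) /\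
  (exists (K h0 : R), 0 < h0 /\
     forall (n : nat) (t : nat -> R), is_grid lmin lmax n t -> maxstep n t <= h0 ->
       (supnorm lmin lmax (fun x => (interp s n t F x - F x)%R)
        <= (K * maxstep n t ^+ scheme_order s)%:E)%E).
Proof.
move=> lmin0 lab beta0 s00 nu1 hexp hRe [F1 [F2 [Fc F1c F2c Fd F1d]]] Cstar.
have ab : lmin <= lmax by exact: ltW.
have [M FM] := bound_on ab F2c.
have M0 : 0 <= M.
  have : lmin \in `[lmin, lmax] by rewrite inE /= in_itv /= lexx ab.
  by move/FM; have := normr_ge0 (F2 lmin); lra.
have [BF FB] := bound_on ab Fc.
have mDp : measurable (`]0%R, +oo[ : set R) by exact: measurable_itv.
pose sp := Num.max (complex.Re eta) 0.
have [M0' hM0] : exists M : R, forall lam, lam \in `[lmin, lmax] ->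
     (\int[nu lam]_(x in `]0%R, +oo[) (expR (sp * x))%:E <= M%:E)%E.
  by apply: hexp; apply/andP; split; [rewrite le_max lexx orbT|rewrite gt_max hRe s00].
have Ile : forall lam, lam \in `[lmin, lmax] ->
    (\int[nu lam]_(x in `]0%R, +oo[) (expR (complex.Re eta * x))%:E <= M0'%:E)%E.
  move=> lam hl; apply: le_trans (hM0 lam hl).
  apply: ge0_le_integral.
  - exact: mDp.
  - by move=> x _; rewrite lee_fin; exact: expR_ge0.
  - apply/(@measurable_EFinP _ _ _ _ (fun x => expR (complex.Re eta * x))).
    by apply: (measurable_funS (E := setT)) => //; exact: E_meas.
  - apply/(@measurable_EFinP _ _ _ _ (fun x => expR (sp * x))).
    by apply: (measurable_funS (E := setT)) => //; exact: E_meas.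
  - move=> x; rewrite /= in_itv /= andbT => x0; rewrite lee_fin ler_expR.
    by apply: ler_wpM2r; [exact: ltW|rewrite le_max lexx].
have CsM : (Cstar <= M0'%:E)%E.
  by apply: ge_ereal_sup => _ [lam hl <-]; apply: Ile; exact: mem_set.
have hmin : lmin \in `[lmin, lmax] by rewrite inE /= in_itv /= lexx ab.
have C0 : (0 <= Cstar)%E.
  apply: le_trans (ereal_sup_ubound (x := (\int[nu lmin]_(x in `]0%R, +oo[) (expR (complex.Re eta * x))%:E)%E) _).
    by apply: integral_ge0 => x _; rewrite lee_fin; exact: expR_ge0.
  by exists lmin => //; exact: set_mem.
have Cfin : (Cstar < +oo)%E by apply: le_lt_trans CsM (ltry _).
split => //.
pose Cf := fine Cstar.
have CE : Cstar = Cf%:E by rewrite /Cf fineK // ge0_fin_numE.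
have Eint : forall lam, lam \in `[lmin, lmax] ->
   (nu lam).-integrable (`]0%R, +oo[ : set R) (EFin \o (fun x => expR (complex.Re eta * x))).
  move=> lam hl; apply/integrableP; split.
    apply/(@measurable_EFinP _ _ _ _ (fun x => expR (complex.Re eta * x))).
    by apply: (measurable_funS (E := setT)) => //; exact: E_meas.
  rewrite (_ : (fun x => _) = (fun x => (expR (complex.Re eta * x))%:E)); last first.
    by apply/funext => x /=; rewrite ger0_norm // expR_ge0.
  exact: le_lt_trans (Ile lam hl) (ltry _).
have IEC : forall lam, lam \in `[lmin, lmax] ->
    \int[nu lam]_(x in `]0%R, +oo[) expR (complex.Re eta * x) <= Cf.
  move=> lam hl.
  have h1 : (\int[nu lam]_(x in `]0%R, +oo[) (expR (complex.Re eta * x))%:E <= Cstar)%E.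
    by apply: ereal_sup_ubound; exists lam => //; exact: set_mem.
  have h0 : (0 <= \int[nu lam]_(x in `]0%R, +oo[) (expR (complex.Re eta * x))%:E)%E.
    by apply: integral_ge0 => x _; rewrite lee_fin; exact: expR_ge0.
  rewrite /Rintegral -lee_fin fineK; first by rewrite -CE.
  by rewrite ge0_fin_numE // (le_lt_trans h1 Cfin).
have herr : forall n t, is_grid lmin lmax n t -> forall x, x \in `[lmin, lmax] ->
    `|interp s n t F x - F x| <= 50 * M * maxstep n t ^+ 2.
  by move=> n t Gr x hx; exact: (@interp_err R lmin lmax M F F1 F2 n t Fc F1c Fd F1d FM Gr s x hx).
split; last first.
  exists (50 * M), 1; split => //.
  move=> n t Gr h1.
  have h0 := maxstep_gt0 Gr.
  apply: ge_ereal_sup => _ [x hx <-]; rewrite lee_fin.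
  apply: (le_trans (herr n t Gr x (mem_set hx))).
  have hp : maxstep n t ^+ 2 <= maxstep n t ^+ scheme_order s.
    case: (s) => //=; rewrite expr2 expr1 -[X in _ <= X]mulr1.
    by apply: ler_wpM2l => //; exact: ltW.
  by apply: ler_wpM2l => //; apply: mulr_ge0.
move=> n t Gr.
have h0 := maxstep_gt0 Gr.
set Sn := supnorm _ _ _.
have Sn0 : (0 <= Sn)%E.
  apply: le_trans (ereal_sup_ubound (x := (`|interp s n t F lmin - F lmin|)%:E) _).
    by rewrite lee_fin.
  by exists lmin => //; exact: set_mem.
have SnB : (Sn <= (50 * M * maxstep n t ^+ 2)%:E)%E.
  by apply: ge_ereal_sup => _ [x hx <-]; rewrite lee_fin; apply: herr => //; exact: mem_set.
pose Sf := fine Sn.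
have SE : Sn = Sf%:E by rewrite /Sf fineK // ge0_fin_numE // (le_lt_trans SnB (ltry _)).
have Sf0 : 0 <= Sf by rewrite -lee_fin -SE.
have DS : forall y, y \in `[lmin, lmax] -> `|interp s n t F y - F y| <= Sf.
  move=> y hy; rewrite -lee_fin -SE; apply: ereal_sup_ubound; exists y => //; exact: set_mem.
rewrite SE CE -EFinD -!EFinM.
apply: ge_ereal_sup => _ [lam hl <-]; rewrite lee_fin.
have hl' : lam \in `[lmin, lmax] := mem_set hl.
have [lam0 laml] : 0 <= lam /\ lam <= lmax.
  by move: hl; rewrite /= in_itv /= => /andP[? ?]; split => //; lra.
rewrite !Nexp_parts cmod_diff //.
set I := interp s n t F.
pose Dfun := fun y => clampext lmin lmax I y - clampext lmin lmax F y.
have mI : measurable_fun setT (clampext lmin lmax I).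
  apply: clampext_meas => //; apply: (measurable_funS (E := setT)) => //; exact: interp_meas.
have mF : measurable_fun setT (clampext lmin lmax F).
  by apply: clampext_meas => //; exact: cont_meas.
have mDf : measurable_fun setT Dfun by apply: measurable_funB.
have cl : forall y, clamp lmin lmax y \in `[lmin, lmax] := fun y => clamp_in _ _ _ y ab.
have bF : forall y, `|clampext lmin lmax F y| <= BF by move=> y; exact: FB _ (cl y).
have bD : forall y, `|Dfun y| <= Sf by move=> y; exact: DS _ (cl y).
have bI : forall y, `|clampext lmin lmax I y| <= Sf + BF.
  move=> y; rewrite (_ : clampext _ _ I y = Dfun y + clampext lmin lmax F y); last by rewrite /Dfun; ring.
  by apply: (le_trans (ler_normD _ _)); apply: lerD.
have mu1 := nu1 lam hl'.
have Ei := Eint lam hl'.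
have [iPI iQI] := @PQint R (nu lam) mu1 (complex.Re eta) (complex.Im eta) lam beta Ei _ _ mI bI.
have [iPF iQF] := @PQint R (nu lam) mu1 (complex.Re eta) (complex.Im eta) lam beta Ei _ _ mF bF.
rewrite -(RintegralB mDp iPI iPF) -(RintegralB mDp iQI iQF).
have eP : \int[nu lam]_(x in (`]0%R, +oo[ : set R))
    (expR (complex.Re eta * x) * cos (complex.Im eta * x) * clampext lmin lmax I (lam + beta * x) -
     clampext lmin lmax I lam -
     (expR (complex.Re eta * x) * cos (complex.Im eta * x) * clampext lmin lmax F (lam + beta * x) -
      clampext lmin lmax F lam))
  = \int[nu lam]_(x in (`]0%R, +oo[ : set R))
    (expR (complex.Re eta * x) * cos (complex.Im eta * x) * Dfun (lam + beta * x) - Dfun lam).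
  by apply: eq_Rintegral => x _; rewrite /Dfun; ring.
have eQ : \int[nu lam]_(x in (`]0%R, +oo[ : set R))
    (expR (complex.Re eta * x) * sin (complex.Im eta * x) * clampext lmin lmax I (lam + beta * x) -
     expR (complex.Re eta * x) * sin (complex.Im eta * x) * clampext lmin lmax F (lam + beta * x))
  = \int[nu lam]_(x in (`]0%R, +oo[ : set R))
    (expR (complex.Re eta * x) * sin (complex.Im eta * x) * Dfun (lam + beta * x)).
  by apply: eq_Rintegral => x _; rewrite /Dfun; ring.
rewrite eP eQ.
have K := @key R (nu lam) mu1 (complex.Re eta) (complex.Im eta) lam beta Ei _ _ mDf bD.
have X0 : 0 <= \int[nu lam]_(x in (`]0%R, +oo[ : set R)) expR (complex.Re eta * x).
  by apply: Rintegral_ge0 => x _; exact: expR_ge0.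
have XC := IEC lam hl'.
apply: (le_trans (ler_wpM2l lam0 K)).
apply: (@le_trans _ _ (lmax * (Sf * (\int[nu lam]_(x in (`]0%R, +oo[ : set R)) expR (complex.Re eta * x) + 1)))).
  by apply: ler_wpM2r => //; apply: mulr_ge0 => //; lra.
rewrite -mulrA [Sf * _]mulrC; apply: ler_wpM2l; first lra.
by apply: ler_wpM2r => //; lra.
Qed.
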